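(* Let $R$ be a commutative ring and $A=(a_{ij})$, $B=(b_{jk})$ be $3\times 3$ matrices over $R$. Define, for $r=1,2,3$ and $s=6(r-1)$: $p_{s+1}=(a_{r2}+b_{12})(a_{r1}+b_{21})$, $p_{s+2}=(a_{r3}+b_{13})(a_{r1}+b_{31})$, $p_{s+3}=(a_{r3}+b_{23})(a_{r2}+b_{32})$, $p_{s+4}=a_{r1}(b_{11}-b_{12}-b_{13}-a_{r2}-a_{r3})$, $p_{s+5}=a_{r2}(b_{22}-b_{21}-b_{23}-a_{r1}-a_{r3})$, $p_{s+6}=a_{r3}(b_{33}-b_{31}-b_{32}-a_{r1}-a_{r2})$, and $p_{19}=b_{12}b_{21}$, $p_{20}=b_{13}b_{31}$, $p_{21}=b_{23}b_{32}$. Then for $r=1,2,3$ with $s=6(r-1)$, the $r$-th row of $AB$ equals $\big(p_{s+4}+p_{s+1}+p_{s+2}-p_{19}-p_{20},\; p_{s+5}+p_{s+1}+p_{s+3}-p_{19}-p_{21},\; p_{s+6}+p_{s+2}+p_{s+3}-p_{20}-p_{21}\big)$. In particular, the product of two $3\times 3$ matrices over a commutative ring can be computed using $21$ multiplications.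
   Context: ''The product can be computed using $k$ multiplications'' means: there are $k$ products, each a product of two linear forms with integer coefficients in the entries of $A$ and $B$, such that every entry of $AB$ is an integer linear combination of these $k$ products, identically for all inputs over any commutative ring; additions, subtractions and multiplications by integer constants are not counted. *)

(* Defs.v *)
From HB Require Import structures.
From mathcomp Require Import all_boot all_order all_algebra.
Set Implicit Arguments. Unset Strict Implicit. Unset Printing Implicit Defensive.
Import GRing.Theory.
Local Open Scope ring_scope.

(* 1-based entry access, as in the paper: ent M i j = m_{ij}, for 1 <= i,j <= 3 *)
Definition ent (R : Type) (M : 'M[R]_3) (i j : nat) : R := M (inord i.-1) (inord j.-1).

(* p_{s+u} for row r (1-based) and u = 1..6, s = 6(r-1) *)
Definition prow (R : comPzRingType) (A B : 'M[R]_3) (r u : nat) : R :=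
  let a := ent A in let b := ent B in
  match u with
  | 1 => (a r 2 + b 1 2) * (a r 1 + b 2 1)
  | 2 => (a r 3 + b 1 3) * (a r 1 + b 3 1)
  | 3 => (a r 3 + b 2 3) * (a r 2 + b 3 2)
  | 4 => a r 1 * (b 1 1 - b 1 2 - b 1 3 - a r 2 - a r 3)
  | 5 => a r 2 * (b 2 2 - b 2 1 - b 2 3 - a r 1 - a r 3)
  | 6 => a r 3 * (b 3 3 - b 3 1 - b 3 2 - a r 1 - a r 2)
  | _ => 0
  end.

Definition p (R : comPzRingType) (A B : 'M[R]_3) (t : nat) : R :=
  let b := ent B in
  if (1 <= t <= 18)%N then prow A B ((t.-1) %/ 6).+1 ((t.-1) %% 6).+1
  else match t with
  | 19 => b 1 2 * b 2 1
  | 20 => b 1 3 * b 3 1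
  | 21 => b 2 3 * b 3 2
  | _ => 0
  end.

Definition linform (R : comPzRingType) (c d : 'I_3 -> 'I_3 -> int) (A B : 'M[R]_3) : R :=
  \sum_(i < 3) \sum_(j < 3) ((c i j)%:~R * A i j + (d i j)%:~R * B i j).

(* "the product of two 3x3 matrices can be computed using k multiplications":
   k products of two integer linear forms in the entries of A and B, such that
   every entry of AB is an integer linear combination of them, identically for
   all inputs over every commutative ring. *)
Definition mult3_computable_with (k : nat) : Prop :=
  exists (c1 d1 c2 d2 : 'I_k -> 'I_3 -> 'I_3 -> int)
         (w : 'I_3 -> 'I_3 -> 'I_k -> int),
  forall (R : comPzRingType) (A B : 'M[R]_3) (i j : 'I_3),
    (A *m B) i j =
    \sum_(t < k) (w i j t)%:~R * (linform (c1 t) (d1 t) A B * linform (c2 t) (d2 t) A B).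

(* Main.v *)
Require Import Defs.
From HB Require Import structures.
From mathcomp Require Import all_boot all_order all_algebra ring.
Import GRing.Theory.
Local Open Scope ring_scope.

Lemma sum3 (R : nmodType) (F : 'I_3 -> R) :
  \sum_(k < 3) F k = F (inord 0) + F (inord 1) + F (inord 2).
Proof.
rewrite !big_ord_recr big_ord0 /= add0r.
by congr (F _ + F _ + F _); apply/val_inj; rewrite /= inordK.
Qed.

Lemma ord3 (r : 'I_3) : r = inord 0 \/ r = inord 1 \/ r = inord 2.
Proof.
case: r => [[|[|[|//]]] Hr]; [left|right;left|right;right]; 
  by apply/val_inj; rewrite /= inordK.
Qed.

Lemma part1 (R : comPzRingType) (A B : 'M[R]_3) (r : 'I_3) :
     let s := (6 * r)%N in
     let P := p A B in
     [/\ (A *m B) r (inord 0) = P (s + 4)%N + P (s + 1)%N + P (s + 2)%N - P 19%N - P 20%N,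
         (A *m B) r (inord 1) = P (s + 5)%N + P (s + 1)%N + P (s + 3)%N - P 19%N - P 21%N
       & (A *m B) r (inord 2) = P (s + 6)%N + P (s + 2)%N + P (s + 3)%N - P 20%N - P 21%N].
Proof.
rewrite /= !mxE !sum3.
case: (ord3 r) => [->|[->|->]]; rewrite !inordK //= /p /prow /ent /=.
all: split; ring.
Qed.

Definition e (a b : nat) (i j : 'I_3) : int := ((i == a :> nat) && (j == b :> nat))%:Z.

Definition c1 (t : 'I_21) (i j : 'I_3) : int :=
  let r := (t %/ 6)%N in
  if (t < 18)%N then match (t %% 6)%N with
   | 0 => e r 1 i j | 1 => e r 2 i j | 2 => e r 2 i j | 3 => e r 0 i j
   | 4 => e r 1 i j | _ => e r 2 i j end else 0.
Definition d1 (t : 'I_21) (i j : 'I_3) : int :=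
  if (t < 18)%N then match (t %% 6)%N with
   | 0 => e 0 1 i j | 1 => e 0 2 i j | 2 => e 1 2 i j | _ => 0 end
  else match val t with 18 => e 0 1 i j | 19 => e 0 2 i j | _ => e 1 2 i j end.
Definition c2 (t : 'I_21) (i j : 'I_3) : int :=
  let r := (t %/ 6)%N in
  if (t < 18)%N then match (t %% 6)%N with
   | 0 => e r 0 i j | 1 => e r 0 i j | 2 => e r 1 i j
   | 3 => - e r 1 i j - e r 2 i j | 4 => - e r 0 i j - e r 2 i j
   | _ => - e r 0 i j - e r 1 i j end else 0.
Definition d2 (t : 'I_21) (i j : 'I_3) : int :=
  if (t < 18)%N then match (t %% 6)%N with
   | 0 => e 1 0 i j | 1 => e 2 0 i j | 2 => e 2 1 i j
   | 3 => e 0 0 i j - e 0 1 i j - e 0 2 i j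
   | 4 => e 1 1 i j - e 1 0 i j - e 1 2 i j
   | _ => e 2 2 i j - e 2 0 i j - e 2 1 i j end
  else match val t with 18 => e 1 0 i j | 19 => e 2 0 i j | _ => e 2 1 i j end.
Definition w (i j : 'I_3) (t : 'I_21) : int :=
  let u := (t %% 6)%N in
  if (t < 18)%N then
    ((t %/ 6 == i)%N && [|| u == 3 + j, (j == 0%N :> nat) && (u <= 1) | (j != 0%N :> nat) && ((u == 0) && (j == 1 :> nat) || (u == 1) && (j == 2 :> nat) || (u == 2))])%N%:Z
  else - ((val j == 0%N) && (val t != 20%N) || (val j == 1%N) && (val t != 19%N) || (val j == 2%N) && (val t != 18%N))%:Z.

Lemma term (R : comPzRingType) (A B : 'M[R]_3) (t : 'I_21) :
  linform (c1 t) (d1 t) A B * linform (c2 t) (d2 t) A B = p A B t.+1.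
Proof.
rewrite /linform !sum3.
case: t => [[|[|[|[|[|[|[|[|[|[|[|[|[|[|[|[|[|[|[|[|[|//]]]]]]]]]]]]]]]]]]]]] Ht];
  rewrite /c1 /d1 /c2 /d2 /e /p /prow /ent /= !inordK //=; ring.
Qed.

Lemma part2 : mult3_computable_with 21.
Proof.
exists c1, d1, c2, d2, w => R A B i j.
under eq_bigr do rewrite term.
have [H0 H1 H2] := @part1 R A B i.
case: (ord3 j) => [->|[->|->]]; [rewrite H0|rewrite H1|rewrite H2].
all: rewrite !big_ord_recr big_ord0 /=.
all: case: (ord3 i) => [->|[->|->]]; rewrite /w /= !inordK //=; ring.
Qed.

Theorem mainTheorem3 :
  (forall (R : comPzRingType) (A B : 'M[R]_3) (r : 'I_3),
     let s := (6 * r)%N in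
     let P := p A B in
     [/\ (A *m B) r (inord 0) = P (s + 4)%N + P (s + 1)%N + P (s + 2)%N - P 19%N - P 20%N,
         (A *m B) r (inord 1) = P (s + 5)%N + P (s + 1)%N + P (s + 3)%N - P 19%N - P 21%N
       & (A *m B) r (inord 2) = P (s + 6)%N + P (s + 2)%N + P (s + 3)%N - P 20%N - P 21%N])
  /\ mult3_computable_with 21.
Proof. split; [exact: part1 | exact: part2]. Qed.
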